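(* Let $g_1,\dots,g_r\in\mathbb R[X_1,\dots,X_n]$ satisfy $1-\|\mathbf X\|_2^2\in\mathcal Q(\mathbf g)$ and $\|g_i\|\le\tfrac12$, with $S=\mathcal S(\mathbf g)\neq\emptyset$. Let $\mathfrak c,\textit{Ł}>0$ be such that $D(x)^{\textit{Ł}}\le\mathfrak c\,G(x)$ for all $x\in[-1,1]^n$. Let $f\in\mathbb R[\mathbf X]$ of degree $d$ with $f^*=\min_Sf>0$, and assume there exists $x\in[-1,1]^n\setminus S$ with $f(x)\le0$. Let $A=\{x\in[-1,1]^n: f(x)\le\frac{3f^*}4\}$. Then for all $x\in A$, $$G(x)\ge\delta:=\frac1{\mathfrak c}\Big(\frac{\epsilon(f)}{8d^2}\Big)^{\textit{Ł}}.$$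
   Context: $\Sigma^2$ sums of squares, $\mathcal S(\mathbf g)=\{x:g_i(x)\ge0\ \forall i\}$, $\mathcal Q(\mathbf g)=\Sigma^2+\sum_i\Sigma^2g_i$, $\|h\|=\max_{[-1,1]^n}|h|$, $\epsilon(f)=f^*/\|f\|$, $G(x)=|\min\{g_1(x),\dots,g_r(x),0\}|$, $D(x)=\operatorname{dist}(x,S)$ (Euclidean), both on $[-1,1]^n$. *)

(* Defs.v *)
From mathcomp Require Import all_boot all_order all_algebra.
From mathcomp Require Import boolp classical_sets reals exp.
From mathcomp Require Export mpoly.
Set Implicit Arguments. Unset Strict Implicit. Unset Printing Implicit Defensive.
Import Order.TTheory GRing.Theory Num.Theory.
Local Open Scope ring_scope.
Local Open Scope classical_set_scope.

Section Defs.
Variables (R : realType) (n : nat).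

Definition is_sos (p : {mpoly R[n]}) : Prop :=
  exists s : seq {mpoly R[n]}, p = \sum_(q <- s) q ^+ 2.

Definition in_qmodule (r : nat) (g : 'I_r -> {mpoly R[n]}) (p : {mpoly R[n]}) : Prop :=
  exists (s0 : {mpoly R[n]}) (s : 'I_r -> {mpoly R[n]}),
    [/\ is_sos s0, (forall i, is_sos (s i)) & p = s0 + \sum_(i < r) s i * g i].

Definition in_cube (x : 'I_n -> R) : Prop := forall i, -1 <= x i <= 1.

Definition in_S (r : nat) (g : 'I_r -> {mpoly R[n]}) (x : 'I_n -> R) : Prop :=
  forall i, 0 <= (g i).@[x].

Definition supnorm (h : {mpoly R[n]}) : R :=
  sup [set `|h.@[x]| | x in in_cube].

Definition fmin (r : nat) (g : 'I_r -> {mpoly R[n]}) (f : {mpoly R[n]}) : R :=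
  inf [set f.@[x] | x in in_S g].

Definition eps_f (r : nat) (g : 'I_r -> {mpoly R[n]}) (f : {mpoly R[n]}) : R :=
  fmin g f / supnorm f.

Definition Gfun (r : nat) (g : 'I_r -> {mpoly R[n]}) (x : 'I_n -> R) : R :=
  `| \big[Num.min/0]_(i < r) (g i).@[x] |.

Definition eucl_dist (x y : 'I_n -> R) : R :=
  Num.sqrt (\sum_(i < n) (x i - y i) ^+ 2).

Definition Dfun (r : nat) (g : 'I_r -> {mpoly R[n]}) (x : 'I_n -> R) : R :=
  inf [set eucl_dist x y | y in in_S g].

End Defs.

(* Main.v *)
Require Import Defs.
From mathcomp Require Import all_boot all_order all_algebra.
From mathcomp Require Import boolp classical_sets reals exp.
From mathcomp Require Import mpoly.
From mathcomp Require Import trigo.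
From mathcomp Require Import polyrcf.
From mathcomp Require Import ring lra zify.
Import Order.TTheory GRing.Theory Num.Theory.
Local Open Scope ring_scope.
Set Implicit Arguments. Unset Strict Implicit. Unset Printing Implicit Defensive.
Section Cheb.
Variable R : realType.

Fixpoint cheb2 (k : nat) : {poly R} * {poly R} :=
  match k with
  | 0 => (1, 'X)
  | k'.+1 => ((cheb2 k').2, 2%:P * 'X * (cheb2 k').2 - (cheb2 k').1)
  end.
Definition cheb k := (cheb2 k).1.

Lemma cheb0 : cheb 0 = 1. Proof. by []. Qed.
Lemma cheb1 : cheb 1 = 'X. Proof. by []. Qed.
Lemma chebSS k : cheb k.+2 = 2%:P * 'X * cheb k.+1 - cheb k.
Proof. by []. Qed.

Lemma cheb_ind (P : nat -> Prop) : P 0 -> P 1 ->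
  (forall k, P k -> P k.+1 -> P k.+2) -> forall k, P k.
Proof.
move=> P0 P1 PS k; suff: P k /\ P k.+1 by case.
elim: k => [|k [Hk Hk1]]; first by split.
by split=> //; apply: PS.
Qed.

Lemma cheb_cos k t : (cheb k).[cos t] = cos (k%:R * t).
Proof.
elim/cheb_ind: k.
- by rewrite cheb0 hornerC mul0r cos0.
- by rewrite cheb1 hornerX mul1r.
move=> k IH0 IH1; rewrite chebSS !hornerE IH0 IH1.
have -> : k.+2%:R * t = (k.+1%:R * t) + t by rewrite -addn1 natrD; ring.
have -> : k%:R * t = (k.+1%:R * t) - t by rewrite -addn1 natrD; ring.
rewrite !cosD cosN sinN; ring.
Qed.

Lemma size_cheb k : (size (cheb k) <= k.+1)%N.
Proof.
elim/cheb_ind: k.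
- by rewrite cheb0 size_poly1.
- by rewrite cheb1 size_polyX.
move=> k IH0 IH1; rewrite chebSS.
apply: (leq_trans (size_polyD _ _)); rewrite geq_max; apply/andP; split.
  have h2 : (size ((2%:P * 'X)%R : {poly R}) <= 2)%N.
    by rewrite mul_polyC; apply: (leq_trans (size_scale_leq _ _)); rewrite size_polyX.
  apply: (leq_trans (size_polyMleq _ _)).
  by move: h2 IH1; lia.
by rewrite size_polyN; apply: (leq_trans IH0); rewrite ltnW.
Qed.

End Cheb.
Section Cheb2.
Variable R : realType.
Lemma cheb_at1 k : (cheb R k).[1] = 1.
Proof. by rewrite -cos0 cheb_cos mulr0 cos0. Qed.

Lemma cheb_deriv1 k : (cheb R k)^`().[1] = (k%:R) ^+ 2.
Proof.
elim/cheb_ind: k.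
- by rewrite cheb0 derivC horner0 expr0n.
- by rewrite cheb1 derivX hornerC expr1n.
move=> k IH0 IH1; rewrite chebSS !derivE.
rewrite !(hornerD, hornerN, hornerM, hornerC, hornerX) IH0 IH1 cheb_at1.
have -> : k.+2%:R = k%:R + 2 :> R by rewrite -addn2 natrD.
have -> : k.+1%:R = k%:R + 1 :> R by rewrite -addn1 natrD.
ring.
Qed.
End Cheb2.
Section Nodes.
Variable R : realType.
Variable d : nat.
Hypothesis hd : (0 < d)%N.

Definition xn (j : nat) : R := cos (j%:R * pi / d%:R).

Lemma xn_arg j : (j <= d)%N -> j%:R * (pi : R) / d%:R \in `[0, (pi : R)].
Proof.
move=> hj; have dp : 0 < d%:R :> R by rewrite ltr0n.
rewrite in_itv /=; apply/andP; split.
  by apply: divr_ge0; [apply: mulr_ge0; [apply: ler0n| apply: pi_ge0]|apply: ltW].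
rewrite ler_pdivrMr // mulrC ler_pM2l ?pi_gt0 //.
by rewrite ler_nat.
Qed.

Lemma xn_lt j k : (j < k)%N -> (k <= d)%N -> xn k < xn j.
Proof.
move=> hjk hk; rewrite /xn ltr_cos ?xn_arg //; last by apply: ltnW; apply: leq_trans hk.
have dp : 0 < d%:R :> R by rewrite ltr0n.
by rewrite ltr_pM2r ?invr_gt0 // ltr_pM2r ?pi_gt0 // ltr_nat.
Qed.

Lemma xn_inj j k : (j <= d)%N -> (k <= d)%N -> xn j = xn k -> j = k.
Proof.
move=> hj hk e; case: (ltngtP j k) => // h.
  by have := xn_lt h hk; rewrite e ltxx.
by have := xn_lt h hj; rewrite e ltxx.
Qed.

Lemma xn_bound j : -1 <= xn j <= 1.
Proof. by rewrite cos_geN1 cos_le1. Qed.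

Lemma xn0 : xn 0 = 1.
Proof. by rewrite /xn mul0r mul0r cos0. Qed.

Lemma cos_npi j : cos (j%:R * pi) = (-1) ^+ j :> R.
Proof.
elim: j => [|j IH]; first by rewrite mul0r cos0 expr0.
by rewrite -addn1 natrD mulrDl mul1r cosDpi IH exprD expr1 mulrN1.
Qed.

Lemma cheb_xn j : (cheb R d).[xn j] = (-1) ^+ j.
Proof.
rewrite /xn cheb_cos.
have -> : d%:R * (j%:R * pi / d%:R) = j%:R * pi :> R.
  by field; rewrite pnatr_eq0 -lt0n.
exact: cos_npi.
Qed.

End Nodes.
Section Lagrange.
Variable R : realType.
Variable d : nat.
Hypothesis hd : (0 < d)%N.
Local Notation x := (xn R d).

Definition lP (k : nat) : {poly R} := \prod_(0 <= j < d.+1 | j != k) ('X - (x j)%:P).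
Definition lprod (k : nat) : R := \prod_(0 <= j < d.+1 | j != k) (x k - x j).
Definition lag (k : nat) : {poly R} := (lprod k)^-1 *: lP k.

Lemma lprod_sign_aux k m : (k <= d)%N -> (m <= d.+1)%N ->
  0 < (-1) ^+ (minn m k) * \prod_(0 <= j < m) (if j != k then x k - x j else 1).
Proof.
move=> hk; elim: m => [|m IH] hm.
  by rewrite big_nil mulr1 min0n expr0 ltr01.
rewrite big_nat_recr //=; have IH' := IH (ltnW hm).
case: (ltngtP m k) => hmk.
- have -> : minn m.+1 k = (minn m k).+1 by rewrite !minnE; lia.
  have hx := @xn_lt R d hd _ _ hmk hk.
  rewrite /= exprS.
  have -> : -1 * (-1) ^+ minn m k * ((\prod_(0 <= i < m) (if i != k then x k - x i else 1)) * (x k - x m))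
     = ((-1) ^+ minn m k * \prod_(0 <= i < m) (if i != k then x k - x i else 1)) * (x m - x k) by ring.
  by apply: mulr_gt0 => //; rewrite subr_gt0.
- have -> : minn m.+1 k = minn m k by rewrite !minnE; lia.
  have hx := @xn_lt R d hd _ _ hmk (hm : (m <= d)%N).
  rewrite /= mulrA.
  by apply: mulr_gt0 => //; rewrite subr_gt0.
- subst m; rewrite /= mulr1.
  by have -> : minn k.+1 k = minn k k by rewrite !minnE; lia.
Qed.

Lemma lprod_sign k : (k <= d)%N -> 0 < (-1) ^+ k * lprod k.
Proof.
move=> hk; have := lprod_sign_aux hk (leqnn d.+1).
have -> : minn d.+1 k = k by rewrite minnE; lia.
by move=> h; rewrite /lprod big_mkcond.
Qed.

Lemma lprod_neq0 k : (k <= d)%N -> lprod k != 0.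
Proof.
move=> hk; apply/eqP => h; have := lprod_sign hk.
by rewrite h mulr0 ltxx.
Qed.

Lemma lag_xn i k : (i <= d)%N -> (k <= d)%N -> (lag k).[x i] = (i == k)%:R.
Proof.
move=> hi hk; rewrite /lag hornerZ /lP horner_prod.
under eq_bigr do rewrite hornerXsubC.
case: eqP => [->|/eqP hik].
  by rewrite -/(lprod k) mulVf // lprod_neq0.
rewrite big_mkcond /= (bigD1_seq i) /=; first by rewrite hik subrr mul0r mulr0.
  by rewrite mem_index_iota.
by move: (iota_uniq 0 d.+1).
Qed.

Lemma size_lP k : (k <= d)%N -> (size (lP k) <= d.+1)%N.
Proof.
move=> hk; rewrite /lP -big_filter -(big_map x predT (fun a => 'X - a%:P)).
rewrite size_prod_XsubC size_map size_filter ltnS.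
have := count_predC (pred1 k) (index_iota 0 d.+1).
rewrite count_uniq_mem ?mem_index_iota ?ltnS ?hk; last exact: iota_uniq.
rewrite size_iota subn0 /=.
have e : count (predC (pred1 k)) (iota 1 d) = count (fun i => i != k) (iota 1 d) by [].
rewrite e; lia.
Qed.

Lemma interp (p : {poly R}) : (size p <= d.+1)%N ->
  p = \sum_(0 <= k < d.+1) p.[x k] *: lag k.
Proof.
move=> hp; apply/eqP; rewrite -subr_eq0; apply/negPn/negP => hq.
set q := p - _ in hq.
have hsq : (size q <= d.+1)%N.
  apply: (leq_trans (size_polyD _ _)); rewrite geq_max hp size_polyN /=.
  apply: (leq_trans (size_sum _ _ _)); apply/bigmax_leqP_seq => k hkr _; move: hkr.
  rewrite mem_index_iota ltnS => /andP[_ hk].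
  apply: (leq_trans (size_scale_leq _ _)).
  by apply: (leq_trans (size_scale_leq _ _)); apply: size_lP.
have iu : uniq (index_iota 0 d.+1) by exact: (iota_uniq 0 d.+1).
have := @max_poly_roots _ q (map x (index_iota 0 d.+1)) hq.
rewrite size_map size_iota subn0 => H.
suff: (d.+1 < size q)%N by rewrite ltnNge hsq.
apply: H.
  apply/allP => _ /mapP [i hi ->]; move: hi; rewrite mem_index_iota ltnS => /andP[_ hi].
  rewrite /root /q hornerD hornerN horner_sum.
  under eq_bigr do rewrite hornerZ.
  rewrite (bigD1_seq i) /= ?mem_index_iota ?ltnS ?hi //.
  rewrite lag_xn // eqxx mulr1 big1_seq ?addr0 ?subrr //.
  move=> k /andP[hk]; rewrite mem_index_iota ltnS => /andP[_ hk'].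
  by rewrite lag_xn // eq_sym (negPf hk) mulr0.
rewrite map_inj_in_uniq //.
move=> a b; rewrite !mem_index_iota !ltnS => /andP[_ ha] /andP[_ hb].
exact: xn_inj.
Qed.

End Lagrange.
Section Markov.
Variable R : realType.

Lemma prodX_at1 (r : seq nat) (P : pred nat) (a : nat -> R) :
  (forall j, a j <= 1) ->
  0 <= (\prod_(j <- r | P j) ('X - (a j)%:P)).[1] /\
  0 <= (\prod_(j <- r | P j) ('X - (a j)%:P))^`().[1].
Proof.
move=> ha; elim: r => [|j r [IH1 IH2]].
  by rewrite big_nil hornerC derivC horner0 ler01 lexx.
rewrite big_cons; case: (P j) => //.
rewrite derivM !hornerE /=.
have h1 : 0 <= 1 - a j by rewrite subr_ge0.
split; first by apply: mulr_ge0.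
rewrite derivB derivX derivC subr0 hornerC mul1r.
by apply: addr_ge0 => //; apply: mulr_ge0.
Qed.

Variable d : nat.
Hypothesis hd : (0 < d)%N.
Local Notation x := (xn R d).

Definition wt k := (lag R d k)^`().[1].

Lemma interp_deriv1 (p : {poly R}) : (size p <= d.+1)%N ->
  p^`().[1] = \sum_(0 <= k < d.+1) p.[x k] * wt k.
Proof.
move=> hp; rewrite {1}(interp hd hp) raddf_sum horner_sum.
by apply: eq_bigr => k _; rewrite /= derivZ hornerZ.
Qed.

Lemma wt_sign k : (k <= d)%N -> 0 <= (-1) ^+ k * wt k.
Proof.
move=> hk; rewrite /wt /lag derivZ hornerZ mulrA.
apply: mulr_ge0; last first.
  by case: (@prodX_at1 (index_iota 0 d.+1) (fun j => j != k) x (fun j => cos_le1 _)).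
have h := @lprod_sign R d hd k hk.
have -> : (-1) ^+ k * (lprod R d k)^-1 = ((-1) ^+ k * lprod R d k)^-1.
  by rewrite invfM -exprVn invrN1 mulrC.
by rewrite invr_ge0 ltW.
Qed.

Lemma markov_end (p : {poly R}) (M : R) : (size p <= d.+1)%N ->
  (forall t, -1 <= t <= 1 -> `|p.[t]| <= M) -> `|p^`().[1]| <= (d%:R) ^+ 2 * M.
Proof.
move=> hp hM.
have hc : (d%:R) ^+ 2 = \sum_(0 <= k < d.+1) (-1) ^+ k * wt k :> R.
  rewrite -(cheb_deriv1 R d) (interp_deriv1 (size_cheb R d)).
  by apply: eq_bigr => k _; rewrite cheb_xn.
rewrite (interp_deriv1 hp) hc mulr_suml.
apply: (le_trans (ler_norm_sum _ _ _)).
rewrite big_seq_cond [X in _ <= X]big_seq_cond.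
apply: ler_sum => k; rewrite mem_index_iota ltnS andbT => /andP[_ hk].
have hw : `|wt k| = (-1) ^+ k * wt k.
  rewrite -(ger0_norm (wt_sign hk)) normrM normrX normrN1 expr1n mul1r //.
rewrite normrM hw mulrC; apply: ler_wpM2l; first exact: wt_sign.
by apply: hM; apply: xn_bound.
Qed.

End Markov.
Section Markov01.
Variable R : realType.

Lemma markov01 (d : nat) (q : {poly R}) (M : R) : (0 < d)%N -> (size q <= d.+1)%N ->
  (forall s, 0 <= s <= 1 -> `|q.[s]| <= M) -> `|q^`().[0]| <= 2 * (d%:R) ^+ 2 * M.
Proof.
move=> hd hq hM.
pose r : {poly R} := (2^-1)%:P - (2^-1)%:P * 'X.
have hr t : r.[t] = 2^-1 - 2^-1 * t by rewrite /r !hornerE.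
have sr : (size r <= 2)%N.
  apply: (leq_trans (size_polyD _ _)); rewrite geq_max size_polyN.
  rewrite (leq_trans (size_polyC_leq1 _)) //= mul_polyC.
  by apply: (leq_trans (size_scale_leq _ _)); rewrite size_polyX.
have hp : (size (q \Po r) <= d.+1)%N.
  apply: (leq_trans (size_comp_poly_leq _ _)).
  move: sr hq; set a := size r; set b := size q => h1 h2.
  rewrite ltnS; apply: (leq_trans (leq_mul (leqnn b.-1) (_ : a.-1 <= 1)%N)); first by lia.
  by lia.
have := markov_end hd hp (M := M) _.
rewrite deriv_comp hornerM horner_comp hr.
have -> : r^`() = - (2^-1)%:P by rewrite /r derivB derivC sub0r derivM derivC derivX mul0r add0r mulr1.
rewrite hornerN hornerC mulr1 subrr normrM normrN.
move=> H.
have h2 : `|2^-1 : R| = 2^-1 by rewrite ger0_norm // invr_ge0 ler0n.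
rewrite h2 in H.
have : `|q^`().[0]| <= 2 * ((d%:R) ^+ 2 * M).
  by rewrite -ler_pdivrMl ?ltr0n // mulrC; apply: H => t ht; rewrite horner_comp; apply: hM; rewrite hr; lra.
by rewrite mulrA.
Qed.
End Markov01.
Section Line.
Variable R : realType.
Variable n : nat.
Implicit Types (f g : {mpoly R[n]}) (z v : 'I_n -> R).

Definition line z v : 'I_n -> {poly R} := fun i => (z i)%:P + (v i)%:P * 'X.
Definition lp z v f : {poly R} := mmap (@polyC R) (line z v) f.

Lemma lp_horner z v f t : (lp z v f).[t] = f.@[fun i => z i + t * v i].
Proof.
rewrite /lp /mmap horner_sum mevalE; apply: eq_bigr => m _.
rewrite hornerM hornerC /mmap1 horner_prod; congr (_ * _); apply: eq_bigr => i _.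
by rewrite horner_exp /line !hornerE mulrC.
Qed.

Lemma size_line z v i : (size (line z v i) <= 2)%N.
Proof.
apply: (leq_trans (size_polyD _ _)); rewrite geq_max.
rewrite (leq_trans (size_polyC_leq1 _)) //= mul_polyC.
by apply: (leq_trans (size_scale_leq _ _)); rewrite size_polyX.
Qed.

Lemma size_prod_line z v (r : seq 'I_n) (e : 'I_n -> nat) :
  (size (\prod_(i <- r) line z v i ^+ e i)%R <= (\sum_(i <- r) e i).+1)%N.
Proof.
elim: r => [|i r IH]; first by rewrite !big_nil size_poly1.
rewrite !big_cons; apply: (leq_trans (size_polyMleq _ _)).
have h1 := size_poly_exp_leq (line z v i) (e i).
have h2 := size_line z v i.
have h3 : (((size (line z v i)).-1 * e i) <= e i)%N by rewrite -[X in (_ <= X)%N]mul1n leq_mul2r; lia.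
move: IH h1 h3; set a := size _; set b := size _; lia.
Qed.

Lemma size_lp z v f : (size (lp z v f) <= msize f)%N.
Proof.
rewrite /lp /mmap; apply: (leq_trans (size_sum _ _ _)).
apply/bigmax_leqP_seq => m hm _.
rewrite mul_polyC; apply: (leq_trans (size_scale_leq _ _)).
apply: (leq_trans (size_prod_line _ _ _ _)).
by rewrite -mdegE; apply: msize_mdeg_lt.
Qed.

End Line.
Section Deriv.
Variable R : realType.
Variable n : nat.
Implicit Types (f g : {mpoly R[n]}) (z v : 'I_n -> R).
Variables z v : 'I_n -> R.
Local Notation L := (lp z v).

Lemma lpD f g : L (f + g) = L f + L g. Proof. exact: mmapD. Qed.
Lemma lpM f g : L (f * g) = L f * L g. Proof. exact: rmorphM. Qed.
Lemma lpC c : L c%:MP = c%:P. Proof. exact: mmapC. Qed.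
Lemma lp0 : L 0 = 0. Proof. exact: mmap0. Qed.
Lemma lpXi i : L 'X_i = line z v i. Proof. by rewrite /lp mmapX mmap1U. Qed.

Definition Err f := (L f)^`() - \sum_(i < n) (v i)%:P * L (mderiv i f).

Lemma ErrD f g : Err (f + g) = Err f + Err g.
Proof.
rewrite /Err lpD derivD.
have -> : \sum_(i < n) (v i)%:P * L (mderiv i (f + g)) =
  \sum_(i < n) (v i)%:P * L (mderiv i f) + \sum_(i < n) (v i)%:P * L (mderiv i g).
  by rewrite -big_split; apply: eq_bigr => i _; rewrite mderivD lpD mulrDr.
by rewrite opprD addrACA.
Qed.

Lemma ErrM f g : Err (f * g) = Err f * L g + L f * Err g.
Proof.
rewrite /Err lpM derivM.
have -> : \sum_(i < n) (v i)%:P * L (mderiv i (f * g)) =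
  (\sum_(i < n) (v i)%:P * L (mderiv i f)) * L g + L f * \sum_(i < n) (v i)%:P * L (mderiv i g).
  rewrite mulr_suml mulr_sumr -big_split; apply: eq_bigr => i _.
  rewrite mderivM lpD !lpM /=; ring.
ring.
Qed.

Lemma ErrC c : Err c%:MP = 0.
Proof.
rewrite /Err lpC derivC big1 ?subrr // => i _.
by rewrite mderivC lp0 mulr0.
Qed.

Lemma ErrX i : Err 'X_i = 0.
Proof.
rewrite /Err lpXi (bigD1 i) //= big1.
  rewrite mderivX mnm1E eqxx /=.
  have -> : (U_(i) - U_(i))%MM = 0%MM by apply/mnmP => j; rewrite mnmBE subnn mnmE.
  rewrite mpolyX0 scale1r -mpolyC1 lpC mulr1 addr0 /line derivD derivC add0r.
  by rewrite derivM derivC derivX mul0r add0r mulr1 subrr.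
move=> j hj; rewrite mderivX mnm1E eq_sym (negPf hj) /= scale0r lp0 mulr0 //.
Qed.

Lemma Err0 f : Err f = 0.
Proof.
rewrite (mpolyE f); elim/big_rec: _ => [|m q _ IH].
  by rewrite -mpolyC0 ErrC.
rewrite ErrD IH addr0 -mul_mpolyC ErrM ErrC mul0r add0r mpolyXE_id.
suff -> : Err (\prod_(i < n) 'X_i ^+ m i) = 0 by rewrite mulr0.
elim/big_rec: _ => [|i p _ IHp]; first by rewrite -mpolyC1 ErrC.
rewrite ErrM IHp mulr0 addr0.
suff -> : Err ('X_i ^+ m i) = 0 by rewrite mul0r.
elim: (m i) => [|k IHk]; first by rewrite expr0 -mpolyC1 ErrC.
by rewrite exprS ErrM IHk ErrX mulr0 mul0r addr0.
Qed.

Lemma lp_deriv f : (L f)^`() = \sum_(i < n) (v i)%:P * L (mderiv i f).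
Proof. by apply/eqP; rewrite -subr_eq0; apply/eqP; exact: Err0. Qed.

End Deriv.

Definition Dd (R : realType) n (f : {mpoly R[n]}) (w v : 'I_n -> R) : R :=
  \sum_(i < n) v i * (mderiv i f).@[w].

Lemma lp_deriv_horner (R : realType) n (z v : 'I_n -> R) f t :
  (lp z v f)^`().[t] = Dd f (fun i => z i + t * v i) v.
Proof.
rewrite lp_deriv horner_sum; apply: eq_bigr => i _.
by rewrite hornerM hornerC lp_horner.
Qed.
Section Bounds.
Variable R : realType.
Variable n : nat.
Variable f : {mpoly R[n]}.
Variable d : nat.
Variable M : R.
Hypothesis hd : (0 < d)%N.
Hypothesis hs : (msize f <= d.+1)%N.
Hypothesis HM : forall y, in_cube y -> `|f.@[y]| <= M.

Lemma cube_conv (z w : 'I_n -> R) s : in_cube z -> in_cube w -> 0 <= s <= 1 ->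
  in_cube (fun i => z i + s * (w i - z i)).
Proof.
move=> hz hw /andP[s0 s1] i; have /andP[z0 z1] := hz i; have /andP[w0 w1] := hw i.
apply/andP; split; nra.
Qed.

Lemma Dd_eq (w1 w2 v : 'I_n -> R) : w1 =1 w2 -> Dd f w1 v = Dd f w2 v.
Proof. by move=> e; apply: eq_bigr => i _; rewrite (meval_eq _ e). Qed.

Lemma dir_bound (z w : 'I_n -> R) : in_cube z -> in_cube w ->
  `|Dd f z (fun i => w i - z i)| <= 2 * (d%:R) ^+ 2 * M.
Proof.
move=> hz hw.
have hq : (size (lp z (fun i => (w i - z i)%R) f) <= d.+1)%N.
  exact: leq_trans (size_lp _ _ _) hs.
have := markov01 hd hq (M := M) _.
rewrite lp_deriv_horner (@Dd_eq _ z); first apply.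
  move=> s hs01; rewrite lp_horner; apply: HM; exact: cube_conv.
by move=> i /=; rewrite mul0r addr0.
Qed.

Lemma sq_le_sum (u : 'I_n -> R) i : u i ^+ 2 <= \sum_j u j ^+ 2.
Proof.
rewrite (bigD1 i) //= lerDl; apply: sumr_ge0 => j _; exact: sqr_ge0.
Qed.

Lemma Dd_lin (z u a : 'I_n -> R) : Dd f z (fun i => u i - a i) - Dd f z (fun i => - u i - a i) = 2 * Dd f z u.
Proof.
rewrite /Dd -sumrB mulr_sumr; apply: eq_bigr => i _; ring.
Qed.

Lemma dir_unit (z u : 'I_n -> R) : in_cube z -> \sum_i u i ^+ 2 <= 1 ->
  `|Dd f z u| <= 2 * (d%:R) ^+ 2 * M.
Proof.
move=> hz hu.
have hc : in_cube u /\ in_cube (fun i => - u i).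
  split=> i; have := le_trans (sq_le_sum u i) hu => h; apply/andP; split; nra.
have h1 := dir_bound hz hc.1; have h2 := dir_bound hz hc.2.
have := Dd_lin z u z.
move=> e; have : `|2 * Dd f z u| <= 2 * (2 * (d%:R) ^+ 2 * M).
  rewrite -e; apply: (le_trans (ler_normB _ _)); lra.
rewrite normrM ger0_norm // => H; lra.
Qed.

Lemma dir_gen (z v : 'I_n -> R) : in_cube z ->
  `|Dd f z v| <= 2 * (d%:R) ^+ 2 * M * Num.sqrt (\sum_i v i ^+ 2).
Proof.
move=> hz; set S := \sum_i v i ^+ 2.
have S0 : 0 <= S by apply: sumr_ge0 => i _; exact: sqr_ge0.
have M0 : 0 <= M.
  have h0 : in_cube (fun _ : 'I_n => 0 : R) by move=> i; rewrite /= lerN10 ler01.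
  exact: le_trans (normr_ge0 _) (HM h0).
case: (eqVneq (Num.sqrt S) 0) => hN.
  have vi0 : forall i, v i = 0.
    move=> i; apply/eqP; rewrite -sqrf_eq0; apply/eqP/le_anti; rewrite sqr_ge0 andbT.
    by apply: (le_trans (sq_le_sum v i)); rewrite -/S -sqrtr_eq0 hN.
  rewrite /Dd big1 ?normr0; first by rewrite hN mulr0.
  by move=> i _; rewrite vi0 mul0r.
set N := Num.sqrt S in hN *.
have Npos : 0 < N by rewrite lt_neqAle eq_sym hN sqrtr_ge0.
pose u := fun i => v i / N.
have hu : \sum_i u i ^+ 2 <= 1.
  have -> : \sum_i u i ^+ 2 = S / N ^+ 2.
    rewrite /S mulr_suml; apply: eq_bigr => i _; rewrite /u expr_div_n //.
  by rewrite sqr_sqrtr // divff // gt_eqF // -sqrtr_gt0.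
have e : Dd f z v = N * Dd f z u.
  rewrite /Dd mulr_sumr; apply: eq_bigr => i _; rewrite /u; field.
  by rewrite gt_eqF.
rewrite e normrM gtr0_norm // mulrC ler_pM2r //; exact: dir_unit.
Qed.

Lemma lipschitz (x y : 'I_n -> R) : in_cube x -> in_cube y ->
  f.@[y] - f.@[x] <= 2 * (d%:R) ^+ 2 * M * eucl_dist x y.
Proof.
move=> hx hy.
have [c hc e] := poly_mvt (lp x (fun i => y i - x i) f) (@ltr01 R).
have hc' : 0 <= c <= 1 by move: hc; rewrite in_itv /= => /andP[a b]; rewrite !ltW.
have e1 : (lp x (fun i => y i - x i) f).[1] = f.@[y].
  by rewrite lp_horner; apply: meval_eq => i /=; rewrite mul1r addrC subrK.
have e0 : (lp x (fun i => y i - x i) f).[0] = f.@[x].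
  by rewrite lp_horner; apply: meval_eq => i /=; rewrite mul0r addr0.
rewrite -e1 -e0 e subr0 mulr1 lp_deriv_horner.
apply: (le_trans (ler_norm _)); apply: (le_trans (dir_gen _ _)).
  exact: cube_conv.
rewrite /eucl_dist le_eqVlt; apply/orP; left; apply/eqP.
by congr (_ * Num.sqrt _); apply: eq_bigr => i _ /=; rewrite -sqrrN opprB.
Qed.

End Bounds.
Section Main.
Variable R : realType.
Variable n : nat.
Local Open Scope classical_set_scope.

Definition cbound (f : {mpoly R[n]}) : R := \sum_(m <- msupp f) `|f@_m|.

Lemma poly_cube_bound (f : {mpoly R[n]}) y : in_cube y -> `|f.@[y]| <= cbound f.
Proof.
move=> hy; rewrite mevalE /cbound; apply: (le_trans (ler_norm_sum _ _ _)).
apply: ler_sum => m _; rewrite normrM; apply: ler_piMr => //.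
rewrite normr_prod.
suff /andP[] : 0 <= \prod_(i < n) `|y i ^+ m i| <= 1 by [].
apply: (big_ind (fun a : R => 0 <= a <= 1)).
- by rewrite ler01 lexx.
- move=> a b /andP[a0 a1] /andP[b0 b1]; apply/andP; split; nra.
move=> i _; rewrite normrX; apply/andP; split; first exact: exprn_ge0.
apply: exprn_ile1; first exact: normr_ge0.
have /andP[h1 h2] := hy i; by rewrite ler_norml h1 h2.
Qed.

Lemma sup_bound (f : {mpoly R[n]}) y : in_cube y -> `|f.@[y]| <= supnorm f.
Proof.
move=> hy; rewrite /supnorm; apply: sup_upper_bound.
  split; first by exists `|f.@[y]|; exists y.
  by exists (cbound f) => _ [z hz <-]; apply: poly_cube_bound.
by exists y.
Qed.

Lemma sos_ge0 (p : {mpoly R[n]}) y : is_sos p -> 0 <= p.@[y].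
Proof.
move=> [s ->]; rewrite raddf_sum; apply: sumr_ge0 => q _.
by rewrite /= expr2 mevalM -expr2 sqr_ge0.
Qed.

Lemma S_ball r (g : 'I_r -> {mpoly R[n]}) y :
  in_qmodule g (1 - \sum_(i < n) 'X_i ^+ 2) -> in_S g y -> \sum_i y i ^+ 2 <= 1.
Proof.
move=> [s0 [s [hs0 hs e]]] hy.
have e1 : (1 - \sum_(i < n) 'X_i ^+ 2).@[y] = 1 - \sum_i y i ^+ 2 :> R.
  rewrite mevalB meval1; congr (_ - _).
  elim/big_rec2: _ => [|i a q _ IH]; first by rewrite meval0.
  by rewrite mevalD IH expr2 mevalM mevalXU -expr2.
have e2 : (s0 + \sum_(i < r) s i * g i).@[y] = s0.@[y] + \sum_(i < r) (s i).@[y] * (g i).@[y].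
  rewrite mevalD; congr (_ + _).
  elim/big_rec2: _ => [|i a q _ IH]; first by rewrite meval0.
  by rewrite mevalD IH mevalM.
have := congr1 (meval y) e; rewrite e1 e2.
move=> e'; rewrite -subr_ge0 e'; apply: addr_ge0; first exact: sos_ge0.
apply: sumr_ge0 => i _; apply: mulr_ge0; first exact: sos_ge0.
exact: hy.
Qed.

Lemma S_cube r (g : 'I_r -> {mpoly R[n]}) y :
  in_qmodule g (1 - \sum_(i < n) 'X_i ^+ 2) -> in_S g y -> in_cube y.
Proof.
move=> hq hy i; have := le_trans (sq_le_sum y i) (S_ball hq hy) => h.
apply/andP; split; nra.
Qed.

End Main.
Unset Implicit Arguments.

Theorem mainTheorem9 (R : realType) (n r : nat) (g : 'I_r -> {mpoly R[n]})
  (c L : R) (f : {mpoly R[n]}) (d : nat) :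
  in_qmodule g (1 - \sum_(i < n) 'X_i ^+ 2) ->
  (forall i, supnorm (g i) <= 1 / 2) ->
  (exists x, in_S g x) ->
  0 < c -> 0 < L ->
  (forall x, in_cube x -> Dfun g x `^ L <= c * Gfun g x) ->
  (msize f).-1 = d ->
  0 < fmin g f ->
  (exists x, [/\ in_cube x, ~ in_S g x & f.@[x] <= 0]) ->
  forall x, in_cube x -> f.@[x] <= 3 / 4 * fmin g f ->
    Gfun g x >= 1 / c * (eps_f g f / (8 * (d%:R) ^+ 2)) `^ L.
Proof.
move=> hq _ [y0 hy0] hc hL hD hdeg hfs _ x hx hfx.
have G0 : 0 <= Gfun g x by apply: normr_ge0.
case: (posnP d) => [d0|dpos].
  rewrite d0 expr0n /= mulr0 invr0 mulr0 powR0 ?mulr0 //; exact: lt0r_neq0.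
set M := supnorm f; set fs := fmin g f.
have HM : forall y, in_cube y -> `|f.@[y]| <= M by move=> y hy; exact: sup_bound.
have hs : (msize f <= d.+1)%N by rewrite -hdeg; lia.
have hfy : forall y, in_S g y -> fs <= f.@[y].
  move=> y hy; rewrite /fs /fmin; apply: ge_inf; last by exists y.
  exists (- cbound f) => _ [z hz <-].
  have := poly_cube_bound f (S_cube hq hz); rewrite ler_norml; case/andP=> //.
have Mpos : 0 < M.
  apply: (lt_le_trans hfs); apply: (le_trans (hfy _ hy0)).
  apply: (le_trans (ler_norm _)); apply: HM; exact: S_cube hq hy0.
set D2 := (d%:R : R) ^+ 2.
have D2pos : 0 < D2 by rewrite /D2 exprn_gt0 // ltr0n.
set del := eps_f g f / (8 * D2).
have del0 : 0 <= del.
  by rewrite /del /eps_f -/fs -/M; apply: divr_ge0; [apply: divr_ge0; apply: ltW|lra].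
have hdist : forall y, in_S g y -> del <= eucl_dist x y.
  move=> y hy; have hyc := S_cube hq hy.
  have h1 := @lipschitz R n f d M dpos hs HM x y hx hyc.
  have h2 := hfy y hy; rewrite -/D2 in h1.
  have h3 : fs <= 4 * (2 * D2 * M * eucl_dist x y) by lra.
  rewrite /del /eps_f -/fs -/M ler_pdivrMr; last by lra.
  rewrite ler_pdivrMr //; apply: (le_trans h3); rewrite le_eqVlt; apply/orP; left; apply/eqP; ring.
have hDf : del <= Dfun g x.
  rewrite /Dfun; apply: lb_le_inf; first by exists (eucl_dist x y0); exists y0.
  by move=> _ [y hy <-]; apply: hdist.
have hpow : del `^ L <= Dfun g x `^ L.
  apply: ge0_ler_powR => //; first exact: ltW.
  by rewrite nnegrE; exact: le_trans hDf.
have := le_trans hpow (hD x hx).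
move=> h; rewrite -subr_ge0.
have -> : Gfun g x - 1 / c * del `^ L = (c * Gfun g x - del `^ L) / c.
  by field; rewrite gt_eqF.
by apply: divr_ge0; [rewrite subr_ge0|apply: ltW].
Qed.
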